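(* For any two distinct elements $\bar c,\bar a$ of $\mathcal C$, the line segment $\bar c\bar a$ meets $\operatorname{conv}(\frac12(d+\mathcal W))$.
   Context: Setting: $G$ compact Lie group, $K\subset G$ closed, $G/K$ connected almost effective, isotropy representation $\mathfrak p=\mathfrak p_1\oplus\cdots\oplus\mathfrak p_r$ ($r\ge2$) with pairwise inequivalent $\mathbb R$-irreducible summands, $d_i=\dim\mathfrak p_i$, $d=(d_1,\dots,d_r)$, $n=\sum d_i$. The scalar curvature of the metric $e^{q_i}Q$ on $\mathfrak p_i$ is $S(q)=\sum_{w\in\mathcal W}A_we^{w\cdot q}$, $\mathcal W\subset\mathbb Z^r$ finite, $A_w\ne0$, each $w$ of type I (one entry $-1$), type II (one entry $1$, two entries $-1$) or type III (one entry $1$, one entry $-2$), other entries $0$; $A_w>0$ for type I and $<0$ otherwise. Assume $\dim\operatorname{conv}(\mathcal W)=r-1$. $J$ is the symmetric bilinear form with $J(p,p)=\frac1{n-1}(\sum p_i)^2-\sum p_i^2/d_i$. $u=\sum_{\bar c\in\mathcal C}F_{\bar c}e^{\bar c\cdot q}$ ($\mathcal C$ finite, $F_{\bar c}\ne0$) is a superpotential: for every $\xi$, $\sum_{(\bar a,\bar c)\in\mathcal C^2,\ \bar a+\bar c=\xi}J(\bar a,\bar c)F_{\bar a}F_{\bar c}$ equals $A_w$ if $\xi=d+w$, $w\in\mathcal W$, and $0$ otherwise; $\mathcal C$ is normalised to lie in $\{\sum\bar x_i=\frac12(n-1)\}$. *)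

(* Defs.v *)
From HB Require Import structures.
From mathcomp Require Import all_boot all_order all_algebra.
Set Implicit Arguments. Unset Strict Implicit. Unset Printing Implicit Defensive.
Import Order.TTheory GRing.Theory Num.Theory.
Local Open Scope ring_scope.

Definition vecR (R : realFieldType) (r : nat) (w : 'rV[int]_r) : 'rV[R]_r :=
  map_mx (fun z : int => z%:~R) w.

Definition dvecR (R : realFieldType) (r : nat) (d : 'I_r -> nat) : 'rV[R]_r :=
  \row_i (d i)%:R.

Definition typeI (r : nat) (w : 'rV[int]_r) : Prop :=
  exists i : 'I_r, w ord0 i = -1 /\ forall l, l != i -> w ord0 l = 0.

Definition typeII (r : nat) (w : 'rV[int]_r) : Prop :=
  exists i j k : 'I_r, [&& i != j, i != k & j != k] /\
    [/\ w ord0 i = 1, w ord0 j = -1, w ord0 k = -1 &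
    forall l, l != i -> l != j -> l != k -> w ord0 l = 0].

Definition typeIII (r : nat) (w : 'rV[int]_r) : Prop :=
  exists i j : 'I_r, [/\ i != j, w ord0 i = 1, w ord0 j = -2 &
    forall l, l != i -> l != j -> w ord0 l = 0].

Definition Jform (R : realFieldType) (r : nat) (d : 'I_r -> nat)
    (p q : 'rV[R]_r) : R :=
  (\sum_i p ord0 i) * (\sum_i q ord0 i) / ((\sum_i d i)%N%:R - 1)
  - \sum_i p ord0 i * q ord0 i / (d i)%:R.

(* affine dimension of conv(W) (= dimension of its affine hull) equals m:
   W is nonempty and the differences w - w0 span an m-dimensional space *)
Definition conv_dim (R : realFieldType) (r : nat) (W : seq 'rV[int]_r) (m : nat)
    : Prop :=
  exists2 w0, w0 \in W &
    \rank (\matrix_(k < size W) (vecR R (nth w0 W k) - vecR R w0)) = m.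

Definition in_conv (R : realFieldType) (r : nat) (P : seq 'rV[R]_r)
    (x : 'rV[R]_r) : Prop :=
  exists lam : 'I_(size P) -> R,
    [/\ forall k, 0 <= lam k, \sum_k lam k = 1 &
        x = \sum_k lam k *: nth 0 P k].

(* u = sum_{c in C} F_c e^{c.q} is a superpotential for S = sum_{w in W} A_w e^{w.q} *)
Definition superpotential (R : realFieldType) (r : nat) (d : 'I_r -> nat)
    (W : seq 'rV[int]_r) (A : 'rV[int]_r -> R)
    (C : seq 'rV[R]_r) (F : 'rV[R]_r -> R) : Prop :=
  forall xi : 'rV[R]_r,
    let lhs := \sum_(a <- C) \sum_(c <- C | a + c == xi)
                 Jform d a c * F a * F c in
    (forall w, w \in W -> xi = dvecR R d + vecR R w -> lhs = A w) /\
    ((forall w, w \in W -> xi <> dvecR R d + vecR R w) -> lhs = 0).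

(* Main.v *)
Require Import Defs.
From HB Require Import structures.
From mathcomp Require Import all_boot all_order all_algebra.
From mathcomp Require Import lra ring.
From Stdlib Require List.
Import List (In).
Import Order.TTheory GRing.Theory Num.Theory.
Set Implicit Arguments. Unset Strict Implicit. Unset Printing Implicit Defensive.
Local Open Scope ring_scope.

Section Lex.
Variable (R : realFieldType) (V : zmodType).
Implicit Types (fs : seq (V -> R)) (x y z : V).

Fixpoint ltl (fs : seq (V -> R)) (x y : V) : bool :=
  match fs with
  | g :: fs' => (g x < g y) || ((g x == g y) && ltl fs' x y)
  | [::] => false
  end.

Lemma ltl_irr fs x : ltl fs x x = false.
Proof. by elim: fs => //= g fs ->; rewrite ltxx eqxx. Qed.

Lemma ltl_trans fs x y z : ltl fs x y -> ltl fs y z -> ltl fs x z.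
Proof.
elim: fs => //= g fs IH.
case/orP=> [h1|/andP[/eqP e1 h1]]; case/orP=> [h2|/andP[/eqP e2 h2]].
- by rewrite (lt_trans h1 h2).
- by rewrite -e2 h1.
- by rewrite e1 h2.
- by rewrite e1 e2 eqxx (IH h1 h2) orbT.
Qed.

Lemma ltl_add fs x y z : (forall g, In g fs -> forall a b, g (a + b) = g a + g b) ->
  ltl fs x y -> ltl fs (x + z) (y + z).
Proof.
elim: fs => //= g fs IH Hadd.
rewrite !(Hadd g (or_introl erefl)).
rewrite ltrD2r (inj_eq (addIr _)).
case/orP=> [->//|/andP[-> h]]; rewrite IH ?orbT // => g' g'in; apply: Hadd.
by right.
Qed.

Lemma ltl_total fs x y :
  [\/ all (fun g => g x == g y) fs, ltl fs x y | ltl fs y x].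
Proof.
elim: fs => /= [|g fs IH]; first by constructor.
have [h|h|h] := ltrgtP (g x) (g y).
- by apply: Or32.
- by apply: Or33.
- by rewrite /=; case: IH => H; [constructor 1|constructor 2|constructor 3].
Qed.

Lemma ltl_head g fs x y : ltl (g :: fs) x y -> g x <= g y.
Proof. by case/orP=> [/ltW//|/andP[/eqP->]]. Qed.

End Lex.

Section LexOrd.
Variable (R : realFieldType) (V : zmodType) (fs : seq (V -> R)).
Hypothesis Hadd : forall g, In g fs -> forall a b, g (a + b) = g a + g b.
Hypothesis Hsep : forall x y, all (fun g => g x == g y) fs -> x = y.
Implicit Types (x y z a b c d m : V).

Definition lel x y := (x == y) || ltl fs x y.

Lemma ltl_addl x y z : ltl fs x y -> ltl fs (z + x) (z + y).
Proof. by rewrite ![z + _]addrC; apply: ltl_add. Qed.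

Lemma lel_trans x y z : lel x y -> lel y z -> lel x z.
Proof.
rewrite /lel; case/orP=> [/eqP->//|h1]; case/orP=> [/eqP<-|h2]; first by rewrite h1 orbT.
by rewrite (ltl_trans h1 h2) orbT.
Qed.

Lemma ltl_lel_trans x y z : ltl fs x y -> lel y z -> ltl fs x z.
Proof. by move=> h1; case/orP=> [/eqP<-//|h2]; apply: ltl_trans h1 h2. Qed.

Lemma lel_ltl_trans x y z : lel x y -> ltl fs y z -> ltl fs x z.
Proof. by case/orP=> [/eqP->//|h1] h2; apply: ltl_trans h1 h2. Qed.

Lemma ltl_lel_add a b c d : ltl fs a b -> lel c d -> ltl fs (a + c) (b + d).
Proof.
move=> h1 h2; apply: (@ltl_lel_trans _ (b + c)); first exact: ltl_add.
case/orP: h2 => [/eqP->|h2]; first by rewrite /lel eqxx.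
by rewrite /lel ltl_addl ?orbT.
Qed.

Lemma lel_add a b c d : lel a b -> lel c d -> lel (a + c) (b + d).
Proof.
case/orP=> [/eqP->|h1] h2; last by rewrite /lel ltl_lel_add ?orbT.
case/orP: h2 => [/eqP->|h2]; first by rewrite /lel eqxx.
by rewrite /lel ltl_addl ?orbT.
Qed.

Lemma ltl_total2 x y : x != y -> ltl fs x y || ltl fs y x.
Proof.
move=> nxy; case: (ltl_total fs x y) => [h|->//|->]; last by rewrite orbT.
by rewrite (Hsep h) eqxx in nxy.
Qed.

Lemma lel_or_gt x y : lel x y || ltl fs y x.
Proof.
rewrite /lel; have [->|nxy] := eqVneq x y; first by [].
by case/orP: (ltl_total2 nxy) => ->; rewrite ?orbT.
Qed.

Lemma max_exists (s : seq V) : s != [::] ->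
  exists2 m, m \in s & forall x, x \in s -> lel x m.
Proof.
elim: s => // a s IH _.
have [->|s0] := eqVneq s [::].
  by exists a; rewrite ?mem_head // => x; rewrite inE => /eqP->; rewrite /lel eqxx.
case: (IH s0) => m ms Hm.
case/orP: (lel_or_gt a m) => h.
  exists m; first by rewrite in_cons ms orbT.
  by move=> x; rewrite in_cons => /orP[/eqP->//|]; apply: Hm.
exists a; first exact: mem_head.
move=> x; rewrite in_cons => /orP[/eqP->|xs]; first by rewrite /lel eqxx.
by rewrite /lel (lel_ltl_trans (Hm x xs) h) orbT.
Qed.

Lemma key1 a c m : lel a m -> lel c m -> a + c = m + m -> a = m /\ c = m.
Proof.
move=> ha hc e.
have [am|am] := eqVneq a m.
  by split=> //; move: e; rewrite am => /addrI.
case/orP: ha => [/eqP am'|ha']; first by rewrite am' eqxx in am.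
by have := ltl_lel_add ha' hc; rewrite e ltl_irr.
Qed.

Lemma key2 a c m M : lel a m -> lel c m -> ltl fs m M -> a + c <> M + m.
Proof.
move=> ha hc hM e.
have h1 := lel_add ha hc.
have h2 : ltl fs (m + m) (M + m) by apply: ltl_add.
by have := lel_ltl_trans h1 h2; rewrite e ltl_irr.
Qed.

End LexOrd.

Section Arith.
Variable R : realFieldType.
Implicit Types a b c e s : R.

Lemma A1 a b c e : 0 < b -> 0 < e -> 0 < e * a + b * c -> - a / b < c / e.
Proof. move=> hb he h. rewrite ltr_pdivrMr // mulrAC ltr_pdivlMr //. nra. Qed.

Lemma A2 b c s : 0 < b -> s < c / b -> 0 < c - s * b.
Proof. by move=> hb; rewrite ltr_pdivlMr // subr_gt0. Qed.

Lemma A3 b c s : 0 < b -> - c / b < s -> 0 < c + s * b.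
Proof. move=> hb; rewrite ltr_pdivrMr // => h. lra. Qed.

Lemma ex_below (U : seq R) : exists s, forall u, u \in U -> s < u.
Proof.
elim: U => [|u U [s Hs]]; first by exists 0.
have [su|us] := ltP s u.
  by exists s => x; rewrite in_cons => /orP[/eqP->//|]; apply: Hs.
exists (u - 1) => x; rewrite in_cons => /orP[/eqP->|xU]; first lra.
have := Hs x xU; lra.
Qed.

Lemma ex_between1 l (U : seq R) : (forall u, u \in U -> l < u) ->
  exists s, l < s /\ forall u, u \in U -> s < u.
Proof.
elim: U => [|u U IH] H; first by exists (l + 1); split => //; lra.
have [s [ls Hs]] : exists s, l < s /\ forall u, u \in U -> s < u.
  by apply: IH => x xU; apply: H; rewrite in_cons xU orbT.
have lu : l < u by apply: H; exact: mem_head.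
have [su|us] := ltP s u.
  by exists s; split => // x; rewrite in_cons => /orP[/eqP->//|]; apply: Hs.
have [m1 m2] := midf_lt lu.
exists ((l + u) / 2); split => // x; rewrite in_cons => /orP[/eqP->//|xU].
have := Hs x xU; lra.
Qed.

Lemma ex_between (L U : seq R) :
  (forall l u, l \in L -> u \in U -> l < u) ->
  exists s, (forall l, l \in L -> l < s) /\ (forall u, u \in U -> s < u).
Proof.
elim: L => [|l L IH] H.
  by have [s Hs] := ex_below U; exists s.
have [s [H1 H2]] : exists s, (forall l, l \in L -> l < s) /\ (forall u, u \in U -> s < u).
  by apply: IH => l' u l'L uU; apply: H => //; rewrite in_cons l'L orbT.
have [ls|sl] := ltP l s.
  by exists s; split => // x; rewrite in_cons => /orP[/eqP->//|]; apply: H1.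
have [s' [ls' Hs']] := ex_between1 (l := l) (U := U) (fun u uU => H l u (mem_head _ _) uU).
exists s'; split => // x; rewrite in_cons => /orP[/eqP->//|xL].
have := H1 x xL; lra.
Qed.

Lemma sum_part (V : zmodType) (T : eqType) (k : T -> R) (g : T -> V) (D : seq T) :
  \sum_(v <- D) g v = \sum_(v <- [seq v <- D | k v == 0]) g v
     + \sum_(v <- [seq v <- D | 0 < k v]) g v + \sum_(v <- [seq v <- D | k v < 0]) g v.
Proof.
elim: D => [|x D IH]; first by rewrite !big_nil !addr0.
rewrite /= big_cons IH.
have [h|h|h] := ltrgtP (k x) 0.
- by rewrite big_cons addrCA.
- by rewrite big_cons !addrA [g x + _]addrC.
- by rewrite big_cons !addrA.
Qed.

Lemma sum_gt0_seq (T : eqType) (g : T -> R) (s : seq T) :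
  (forall v, v \in s -> 0 <= g v) -> forall x, x \in s -> 0 < g x ->
  0 < \sum_(v <- s) g v.
Proof.
move=> H x xs gx.
have H0 : 0 <= \sum_(v <- s) g v by rewrite big_seq sumr_ge0.
rewrite lt_def H0 andbT.
rewrite big_seq psumr_neq0; last by move=> i /H.
by apply/hasP; exists x => //; rewrite xs gx.
Qed.

End Arith.

Definition dot (R : realFieldType) r (y x : 'rV[R]_r) := \sum_i y ord0 i * x ord0 i.

Section Dot.
Variable (R : realFieldType) (r : nat).
Implicit Types (x y z : 'rV[R]_r).
Lemma dotDr y x z : dot y (x + z) = dot y x + dot y z.
Proof. by rewrite /dot -big_split; apply: eq_bigr => i _; rewrite mxE mulrDr. Qed.
Lemma dotDl y x z : dot (y + z) x = dot y x + dot z x.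
Proof. by rewrite /dot -big_split; apply: eq_bigr => i _; rewrite mxE mulrDl. Qed.
Lemma dotZr y x a : dot y (a *: x) = a * dot y x.
Proof. by rewrite /dot mulr_sumr; apply: eq_bigr => i _; rewrite mxE mulrCA. Qed.
Lemma dotZl y x a : dot (a *: y) x = a * dot y x.
Proof. by rewrite /dot mulr_sumr; apply: eq_bigr => i _; rewrite mxE mulrA. Qed.
Lemma dotNr y x : dot y (- x) = - dot y x.
Proof. by rewrite -scaleN1r dotZr mulN1r. Qed.
Lemma dot_delta j x : dot (delta_mx ord0 j) x = x ord0 j.
Proof.
rewrite /dot (bigD1 j) //= mxE !eqxx mul1r big1 ?addr0 // => i ij.
by rewrite mxE (negbTE ij) andbF mul0r.
Qed.
End Dot.

Lemma gordan (R : realFieldType) r (n : nat) : forall (S : {set 'I_r}) (D : seq 'rV[R]_r),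
  (#|S| <= n)%N -> (forall v, v \in D -> forall j, j \notin S -> v ord0 j = 0) ->
  (exists y, forall v, v \in D -> 0 < dot y v) \/
  (exists mu : 'rV[R]_r -> R, [/\ forall v, 0 <= mu v,
      exists2 v, v \in D & 0 < mu v & \sum_(v <- D) mu v *: v = 0]).
Proof.
elim: n => [|n IH] S D hS hD.
  have S0 : S = set0 by apply: cards0_eq; move: hS; rewrite leqn0 => /eqP.
  have D0 : forall v, v \in D -> v = 0.
    move=> v vD; apply/rowP => j; rewrite mxE; apply: hD => //.
    by rewrite S0 inE.
  case: D hD D0 => [|v0 D] hD D0; first by left; exists 0.
  right; exists (fun _ => 1); split => //.
  - by exists v0; rewrite ?mem_head.
  - by rewrite big1_seq // => v /andP[_ vD]; rewrite (D0 v vD) scaler0.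
have [hS'|hS'] := leqP #|S| n; first exact: IH hS' hD.
have /set0Pn [j jS] : S != set0 by rewrite -card_gt0; apply: leq_ltn_trans hS'.
set S' := S :\ j.
have hS1 : (#|S'| <= n)%N.
  by move: hS; rewrite (cardsD1 j S) jS add1n ltnS.
pose Z := [seq v : 'rV[R]_r <- D | v ord0 j == 0].
pose P := [seq v : 'rV[R]_r <- D | 0 < v ord0 j].
pose N := [seq v : 'rV[R]_r <- D | v ord0 j < 0].
pose w (p q : 'rV[R]_r) := (- q ord0 j) *: p + (p ord0 j) *: q.
pose D' := Z ++ [seq w p q | p <- P, q <- N].
have hD' : forall v, v \in D' -> forall i, i \notin S' -> v ord0 i = 0.
  move=> v; rewrite mem_cat => /orP[vZ|/allpairsP[[p q] [/= pP qN ->]]] i.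
    move: vZ; rewrite /Z mem_filter => /andP[/eqP vj vD].
    rewrite in_setD1 negb_and negbK => /orP[/eqP->//|iS]; exact: hD.
  rewrite in_setD1 negb_and negbK => /orP[/eqP->|iS].
    by rewrite !mxE; ring.
  move: pP qN; rewrite /P /N !mem_filter => /andP[_ pD] /andP[_ qD].
  by rewrite !mxE (hD p pD i iS) (hD q qD i iS) !mulr0 addr0.
have [[y' Hy']|[mu' [mu'0 [x xD' mux] sum']]] := IH S' D' hS1 hD'.
  have Hw : forall p q, p \in P -> q \in N ->
      0 < (- q ord0 j) * dot y' p + p ord0 j * dot y' q.
    move=> p q pP qN; have := Hy' (w p q); rewrite /w dotDr !dotZr; apply.
    by rewrite mem_cat; apply/orP; right; apply: allpairs_f.
  pose L := [seq - dot y' p / p ord0 j | p <- P].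
  pose U := [seq dot y' q / (- q ord0 j) | q <- N].
  have Hc : forall l u, l \in L -> u \in U -> l < u.
    move=> l u /mapP[p pP ->] /mapP[q qN ->].
    apply: A1; last exact: Hw pP qN.
      by move: pP; rewrite /P mem_filter => /andP[].
    by move: qN; rewrite /N mem_filter oppr_gt0 => /andP[].
  have [s [Hl Hu]] := ex_between Hc.
  left; exists (y' + s *: delta_mx ord0 j) => v vD.
  rewrite dotDl dotZl dot_delta.
  have [h|h|h] := ltrgtP (v ord0 j) 0.
  - have vN : v \in N by rewrite /N mem_filter h.
    have := Hu _ (map_f (fun q => dot y' q / (- q ord0 j)) vN).
    by move/A2; rewrite oppr_gt0 mulrN opprK; apply.
  - have vP : v \in P by rewrite /P mem_filter h.
    have := Hl _ (map_f (fun p => - dot y' p / p ord0 j) vP).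
    by move/A3; apply.
  - rewrite h mulr0 addr0; apply: Hy'.
    by rewrite mem_cat /Z mem_filter h eqxx vD.
pose mu (v : 'rV[R]_r) := if v ord0 j == 0 then mu' v
  else if 0 < v ord0 j then \sum_(q <- N) mu' (w v q) * (- q ord0 j)
  else \sum_(p <- P) mu' (w p v) * p ord0 j.
have NP : forall q, q \in N -> q ord0 j < 0.
  by move=> q; rewrite /N mem_filter => /andP[].
have PP : forall p, p \in P -> 0 < p ord0 j.
  by move=> p; rewrite /P mem_filter => /andP[].
right; exists mu; split.
- move=> v; rewrite /mu; case: ifP => _; first exact: mu'0.
  case: ifP => _; rewrite big_seq sumr_ge0 // => q qN; apply: mulr_ge0 => //.
    by rewrite oppr_ge0 ltW // NP.
  by rewrite ltW // PP.
- move: xD' mux; rewrite mem_cat => /orP[xZ|/allpairsP[[p q] [/= pP qN ->]]] mux.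
    move: xZ; rewrite /Z mem_filter => /andP[xj xD].
    by exists x => //; rewrite /mu xj.
  exists p; first by move: pP; rewrite /P mem_filter => /andP[].
  rewrite /mu (gt_eqF (PP p pP)) (PP p pP).
  eapply sum_gt0_seq; [|exact: qN|].
    move=> q' q'N; apply: mulr_ge0 => //; by rewrite oppr_ge0 ltW // NP.
  by apply: mulr_gt0 => //; rewrite oppr_gt0 NP.
- rewrite (sum_part (fun v : 'rV[R]_r => v ord0 j)) -/Z -/P -/N.
  move: sum'; rewrite big_cat /= big_allpairs_dep /=.
  have -> : \sum_(v <- Z) mu v *: v = \sum_(v <- Z) mu' v *: v.
    by apply: eq_big_seq => v; rewrite /Z mem_filter /mu => /andP[->].
  have -> : \sum_(v <- P) mu v *: v =
      \sum_(p <- P) \sum_(q <- N) (mu' (w p q) * (- q ord0 j)) *: p.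
    apply: eq_big_seq => p pP; rewrite /mu (gt_eqF (PP p pP)) (PP p pP).
    by rewrite scaler_suml.
  have -> : \sum_(v <- N) mu v *: v =
      \sum_(p <- P) \sum_(q <- N) (mu' (w p q) * p ord0 j) *: q.
    rewrite exchange_big /=; apply: eq_big_seq => q qN.
    rewrite /mu (lt_eqF (NP q qN)) ltNge (ltW (NP q qN)) /=.
    by rewrite scaler_suml.
  move=> e; apply: eq_trans e; rewrite -addrA; congr (_ + _).
  rewrite -big_split /=; apply: eq_bigr => p _.
  rewrite -big_split /=; apply: eq_bigr => q _.
  by rewrite /w scalerDr !scalerA.
Qed.

Section J.
Variable (R : realFieldType) (r : nat) (d : 'I_r -> nat).
Implicit Types (p q x : 'rV[R]_r).

Lemma JformC p q : Jform d p q = Jform d q p.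
Proof.
rewrite /Jform [(\sum_i p _ _) * _]mulrC; congr (_ - _).
by apply: eq_bigr => i _; rewrite [p _ _ * _]mulrC.
Qed.

Lemma JformDr p q x : Jform d p (q + x) = Jform d p q + Jform d p x.
Proof.
rewrite /Jform.
have -> : \sum_i (q + x) ord0 i = \sum_i q ord0 i + \sum_i x ord0 i.
  by rewrite -big_split; apply: eq_bigr => i _; rewrite mxE.
have -> : \sum_i p ord0 i * (q + x) ord0 i / (d i)%:R =
   \sum_i p ord0 i * q ord0 i / (d i)%:R + \sum_i p ord0 i * x ord0 i / (d i)%:R.
  by rewrite -big_split; apply: eq_bigr => i _; rewrite mxE mulrDr mulrDl.
ring.
Qed.

Lemma JformNr p q : Jform d p (- q) = - Jform d p q.
Proof.
rewrite /Jform.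
have -> : \sum_i (- q) ord0 i = - \sum_i q ord0 i.
  by rewrite -sumrN; apply: eq_bigr => i _; rewrite mxE.
have -> : \sum_i p ord0 i * (- q) ord0 i / (d i)%:R =
   - \sum_i p ord0 i * q ord0 i / (d i)%:R.
  by rewrite -sumrN; apply: eq_bigr => i _; rewrite mxE mulrN mulNr.
ring.
Qed.

Lemma JformBr p q x : Jform d p (q - x) = Jform d p q - Jform d p x.
Proof. by rewrite JformDr JformNr. Qed.

Lemma JformBl p q x : Jform d (q - x) p = Jform d q p - Jform d x p.
Proof. by rewrite JformC JformBr !(JformC p). Qed.

Lemma Jneg x : (forall i, (0 < d i)%N) -> \sum_i x ord0 i = 0 -> x != 0 ->
  Jform d x x < 0.
Proof.
move=> hd hx x0; rewrite /Jform hx !mul0r sub0r oppr_lt0.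
have [i xi] : exists i, x ord0 i != 0.
  apply/existsP; apply: contraR x0 => /existsPn H; apply/eqP/rowP => i.
  by rewrite mxE; apply/eqP; move: (H i); rewrite negbK.
have H0 : forall k : 'I_r, 0 <= x ord0 k * x ord0 k / (d k)%:R.
  by move=> k; rewrite -expr2 divr_ge0 ?sqr_ge0 ?ler0n.
rewrite lt_def sumr_ge0 // andbT psumr_neq0 //; apply/hasP; exists i.
  by rewrite mem_index_enum.
by rewrite /= divr_gt0 ?ltr0n ?hd // lt_def mulf_neq0 //= -expr2 sqr_ge0.
Qed.
End J.

Lemma inner_sum (R : realFieldType) r (C : seq 'rV[R]_r) (uC : uniq C) a xi
  (h : 'rV[R]_r -> R) :
  \sum_(c <- C | a + c == xi) h c = if xi - a \in C then h (xi - a) else 0.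
Proof.
rewrite (eq_bigl (pred1 (xi - a))) => [|c]; last first.
  by apply/eqP/eqP => [<-|->]; [rewrite addrC addKr | rewrite addrC subrK].
case: ifP => h1; first by rewrite -big_filter filter_pred1_uniq // big_seq1.
by rewrite big1_seq // => c /andP[/eqP -> cC]; rewrite cC in h1.
Qed.

Lemma core (R : realFieldType) r (d : 'I_r -> nat) W (A : 'rV[int]_r -> R)
  (C : seq 'rV[R]_r) F :
  (forall i, (0 < d i)%N) -> uniq C -> (forall c, c \in C -> F c != 0) ->
  superpotential d W A C F ->
  (forall c, c \in C -> \sum_i c ord0 i = ((\sum_i d i)%N%:R - 1) / 2) ->
  forall cb ab y, cb \in C -> ab \in C -> cb != ab ->
  (forall w, w \in W -> dot y (2%:R^-1 *: (dvecR R d + vecR R w)) < dot y cb) ->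
  (forall w, w \in W -> dot y (2%:R^-1 *: (dvecR R d + vecR R w)) < dot y ab) ->
  False.
Proof.
move=> hd uC hF hsup hsum cb ab y cbC abC nab Hcb Hab.
pose fs := dot y :: [seq (fun x : 'rV[R]_r => x ord0 i) | i <- enum 'I_r].
have Hadd : forall g, In g fs -> forall a b, g (a + b) = g a + g b.
  move=> g [<-|]; first exact: dotDr.
  elim: (enum 'I_r) => //= i s IH [<-|/IH//] a b; by rewrite mxE.
have Hsep : forall x x', all (fun g => g x == g x') fs -> x = x'.
  move=> x x' /= /andP[_]; rewrite all_map => /allP H; apply/rowP => i.
  by apply/eqP; apply: (H i); rewrite mem_enum.
have Cn : C != [::] by apply/eqP => C0; rewrite C0 in cbC.
have [a1 a1C Ha1] := max_exists Hsep Cn.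
have [x [xC xa1 Hx]] : exists x, [/\ x \in C, x != a1 &
    forall w, w \in W -> dot y (2%:R^-1 *: (dvecR R d + vecR R w)) < dot y x].
  have [e|ne] := eqVneq cb a1; last by exists cb.
  by exists ab; split => //; rewrite -e eq_sym.
pose C1 := [seq c <- C | c != a1].
have C1n : C1 != [::].
  apply/eqP => C0; have : x \in C1 by rewrite mem_filter xa1 xC.
  by rewrite C0.
have [a2 a2C1 Ha2] := max_exists Hsep C1n.
have [a2a1 a2C] : a2 != a1 /\ a2 \in C by move: a2C1; rewrite mem_filter => /andP[].
have lt21 : ltl fs a2 a1.
  by move: (Ha1 a2 a2C); rewrite /lel (negbTE a2a1) /= => ->.
have HC1 : forall c, c \in C -> c != a1 -> lel fs c a2.
  by move=> c cC ca1; apply: Ha2; rewrite mem_filter ca1 cC.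
have fx2 : dot y x <= dot y a2.
  by case/orP: (HC1 x xC xa1) => [/eqP->//|/ltl_head].
have f21 : dot y a2 <= dot y a1 by apply: ltl_head lt21.
have Hnot : forall xi, 2%:R * dot y x <= dot y xi ->
    forall w, w \in W -> xi <> dvecR R d + vecR R w.
  move=> xi hxi w wW e; have := Hx w wW; rewrite dotZr -e; lra.
have lhs0 : forall xi, 2%:R * dot y x <= dot y xi ->
   \sum_(a <- C) (if xi - a \in C then Jform d a (xi - a) * F a * F (xi - a) else 0)
   = 0.
  move=> xi hxi; have [_ H0] := hsup xi; apply: eq_trans (H0 (Hnot xi hxi)).
  by apply: eq_bigr => a _; rewrite inner_sum.
have J11 : Jform d a1 a1 = 0.
  have := lhs0 (a1 + a1); rewrite dotDr => /(_ ltac:(lra)).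
  rewrite (bigD1_seq a1) //= big1_seq ?addr0; last first.
    move=> a /andP[aa1 aC]; case: ifP => // h.
    have [e _] := key1 Hadd (Ha1 a aC) (Ha1 _ h) (etrans (addrC _ _) (subrK _ _)).
    by rewrite e eqxx in aa1.
  rewrite addrK a1C => /eqP; rewrite !mulf_eq0 !(negbTE (hF _ a1C)) !orbF.
  by move/eqP.
have J12 : Jform d a1 a2 = 0.
  have := lhs0 (a1 + a2); rewrite dotDr => /(_ ltac:(lra)).
  rewrite (bigD1_seq a1) //= -big_filter -/C1 (bigD1_seq a2) ?filter_uniq //=.
  rewrite big1_seq ?addr0; last first.
    move=> a /andP[aa2 aC1]; case: ifP => // h.
    have [aa1 aC] : a != a1 /\ a \in C by move: aC1; rewrite mem_filter => /andP[].
    have [e|ne] := eqVneq (a1 + a2 - a) a1.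
      move/eqP: e; rewrite subr_eq (inj_eq (addrI _)) => /eqP e'.
      by rewrite e' eqxx in aa2.
    have := key2 Hadd (HC1 a aC aa1) (HC1 _ h ne) lt21.
    by case; rewrite addrC subrK.
  have -> : a1 + a2 - a1 = a2 by rewrite addrC addKr.
  rewrite addrK a1C a2C (JformC d a2 a1) => e.
  have h2 : (2%:R : R) != 0 by rewrite pnatr_eq0.
  have : Jform d a1 a2 * (2%:R * F a1 * F a2) = 0 by rewrite -e; ring.
  move/eqP; rewrite !mulf_eq0 (negbTE h2) !(negbTE (hF _ a1C)) !(negbTE (hF _ a2C)).
  by rewrite !orbF => /eqP.
have J22 : Jform d a2 a2 = 0.
  have := lhs0 (a2 + a2); rewrite dotDr => /(_ ltac:(lra)).
  rewrite (bigD1_seq a2) //= big1_seq ?addr0; last first.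
    move=> a /andP[aa2 aC]; case: ifP => // h.
    have [ea|na] := eqVneq a a1.
      by rewrite ea JformBr JformDr J12 J11 !(addr0, subr0, mul0r).
    have [eb|nb] := eqVneq (a2 + a2 - a) a1.
      have E : a2 + a2 = a1 + a by move/eqP: eb; rewrite subr_eq => /eqP.
      have ea' : a = a2 + a2 - a1 by rewrite E addrC addKr.
      rewrite eb JformC ea' JformBr JformDr J12 J11.
      by rewrite !(addr0, subr0, mul0r).
    have [e _] := key1 Hadd (HC1 a aC na) (HC1 _ h nb) (etrans (addrC _ _) (subrK _ _)).
    by rewrite e eqxx in aa2.
  rewrite addrK a2C => /eqP; rewrite !mulf_eq0 !(negbTE (hF _ a2C)) !orbF.
  by move/eqP.
have s12 : \sum_i (a1 - a2) ord0 i = 0.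
  have -> : \sum_i (a1 - a2) ord0 i = \sum_i (a1 ord0 i - a2 ord0 i).
    by apply: eq_bigr => i _; rewrite !mxE.
  by rewrite sumrB hsum // hsum // subrr.
have nz : a1 - a2 != 0 by rewrite subr_eq0 eq_sym.
have := Jneg hd s12 nz.
rewrite JformBl !JformBr J11 J12 (JformC d a2 a1) J12 J22.
by rewrite !subrr ltxx.
Qed.

Theorem corollary3p4 (R : realFieldType) (r : nat) (d : 'I_r -> nat)
    (W : seq 'rV[int]_r) (A : 'rV[int]_r -> R)
    (C : seq 'rV[R]_r) (F : 'rV[R]_r -> R) :
  (2 <= r)%N ->
  (forall i, (0 < d i)%N) ->
  uniq W ->
  (forall w, w \in W -> A w != 0) ->
  (forall w, w \in W -> [/\ typeI w -> 0 < A w,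
                            typeII w -> A w < 0 &
                            typeIII w -> A w < 0]) ->
  (forall w, w \in W -> typeI w \/ typeII w \/ typeIII w) ->
  conv_dim R W r.-1 ->
  uniq C ->
  (forall c, c \in C -> F c != 0) ->
  superpotential d W A C F ->
  (forall c, c \in C -> \sum_i c ord0 i = ((\sum_i d i)%N%:R - 1) / 2) ->
  forall cb ab, cb \in C -> ab \in C -> cb != ab ->
  exists2 t : R, 0 <= t <= 1 &
    in_conv [seq (2%:R)^-1 *: (dvecR R d + vecR R w) | w <- W]
            ((1 - t) *: cb + t *: ab).
Proof.
move=> hr hd uW hA hsign htype hdim uC hF hsup hsum cb ab cbC abC nab.
pose P := [seq (2%:R)^-1 *: (dvecR R d + vecR R w) | w <- W].
pose D := [seq cb - p | p <- P] ++ [seq ab - p | p <- P].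
have hS : (#|[set: 'I_r]| <= r)%N by rewrite cardsT card_ord.
have hD : forall v, v \in D -> forall j, j \notin [set: 'I_r] -> v ord0 j = (0 : R).
  by move=> ? _ j; rewrite inE.
have [[y Hy]|[mu [mu0 [v vD muv] sumD]]] := gordan hS hD.
  exfalso; apply: (core (y := y) hd uC hF hsup hsum cbC abC nab) => w wW.
    have := Hy (cb - 2%:R^-1 *: (dvecR R d + vecR R w)).
    rewrite dotDr dotNr subr_gt0; apply.
    by rewrite mem_cat; apply/orP; left; apply: map_f; apply: map_f.
  have := Hy (ab - 2%:R^-1 *: (dvecR R d + vecR R w)).
  rewrite dotDr dotNr subr_gt0; apply.
  by rewrite mem_cat; apply/orP; right; apply: map_f; apply: map_f.
pose a := \sum_(p <- P) mu (cb - p).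
pose b := \sum_(p <- P) mu (ab - p).
have a0 : 0 <= a by rewrite /a sumr_ge0.
have b0 : 0 <= b by rewrite /b sumr_ge0.
have s0 : 0 < a + b.
  move: vD; rewrite mem_cat => /orP[] /mapP[p pP ev].
    have : 0 < a by apply: (sum_gt0_seq (fun q _ => mu0 _) pP); rewrite -ev.
    lra.
  have : 0 < b by apply: (sum_gt0_seq (fun q _ => mu0 _) pP); rewrite -ev.
  lra.
have sne : a + b != 0 by rewrite gt_eqF.
have key : a *: cb + b *: ab = \sum_(p <- P) (mu (cb - p) + mu (ab - p)) *: p.
  move: sumD; rewrite big_cat (big_map (fun p => cb - p)) (big_map (fun p => ab - p)) /=.
  have E1 : forall c, \sum_(p <- P) mu (c - p) *: (c - p) =
      (\sum_(p <- P) mu (c - p)) *: c - \sum_(p <- P) mu (c - p) *: p.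
    by move=> c; rewrite scaler_suml -sumrB; apply: eq_bigr => p _; rewrite scalerBr.
  rewrite !E1 -/a -/b => h.
  under eq_bigr do rewrite scalerDl.
  rewrite big_split /=.
  apply/eqP; rewrite -subr_eq0; apply/eqP; apply: eq_trans h.
  by rewrite opprD addrACA.
exists (b / (a + b)).
  rewrite divr_ge0 ?(ltW s0) //= ler_pdivrMr // mul1r; lra.
exists (fun k : 'I_(size P) => (mu (cb - nth 0 P k) + mu (ab - nth 0 P k)) / (a + b)).
have hn : forall (V : zmodType) (g : 'rV[R]_r -> V),
    \sum_(k < size P) g (nth 0 P k) = \sum_(p <- P) g p.
  by move=> V g; rewrite (big_nth 0) big_mkord.
split.
- by move=> k; rewrite divr_ge0 // addr_ge0.
- rewrite -mulr_suml (hn _ (fun p => mu (cb - p) + mu (ab - p))) big_split /=.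
  by rewrite -/a -/b divff.
- rewrite (hn _ (fun p => ((mu (cb - p) + mu (ab - p)) / (a + b)) *: p)).
  have -> : \sum_(p <- P) ((mu (cb - p) + mu (ab - p)) / (a + b)) *: p =
     (a + b)^-1 *: \sum_(p <- P) (mu (cb - p) + mu (ab - p)) *: p.
    by rewrite scaler_sumr; apply: eq_bigr => p _; rewrite scalerA mulrC.
  rewrite -key.
  have -> : 1 - b / (a + b) = a / (a + b).
    by rewrite -(divff sne) -mulrBl addrK.
  by rewrite scalerDr !scalerA ![(a + b)^-1 * _]mulrC.
Qed.
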